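(* Let $G$ be a $3^*$-connected cubic graph of order $2n$ with $n\geq 4$. Then $\chi'_{[n-1]}(G)=4$.
   Context: All graphs are finite, simple (no loops, no parallel edges), connected and cubic. A bridgeless cubic graph $G$ is $3^*$-connected if there exist two vertices $a,b\in V(G)$ and three internally vertex-disjoint $a$–$b$ paths $Q_1,Q_2,Q_3$ with $V(G)=V(Q_1)\cup V(Q_2)\cup V(Q_3)$. For a positive integer $k$, a $[k]$-matching of $G$ is a matching of $G$ with exactly $k$ edges. The excessive $[k]$-index $\chi'_{[k]}(G)$ is the minimum number of $[k]$-matchings of $G$ whose union is $E(G)$; if some edge of $G$ lies in no $[k]$-matching, one sets $\chi'_{[k]}(G)=\infty$. *)

(* Defs.v *)
From mathcomp Require Import all_boot.
Set Implicit Arguments. Unset Strict Implicit. Unset Printing Implicit Defensive.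

Section Graphs.
Variable T : finType.
Variable e : rel T.

Definition simple_graph : Prop := symmetric e /\ irreflexive e.

Definition cubic : Prop := forall x : T, #|[set y | e x y]| = 3.

Definition connected_graph : Prop := forall x y : T, connect e x y.

Definition edges : {set {set T}} :=
  [set s : {set T} | [exists x, exists y, e x y && (s == [set x; y])]].

Definition bridgeless : Prop :=
  forall u v : T, e u v ->
    connect (fun x y => e x y && ([set x; y] != [set u; v])) u v.

Definition is_path (a b : T) (p : seq T) : Prop :=
  [/\ path e a p, last a p = b & uniq (a :: p)].

Definition int_disjoint (a b : T) (p q : seq T) : Prop :=
  forall x, x \in a :: p -> x \in a :: q -> x = a \/ x = b.

Definition three_star_connected : Prop :=
  exists a b : T, exists p1 p2 p3 : seq T,
    [/\ a != b,
        [/\ is_path a b p1, is_path a b p2 & is_path a b p3],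
        [/\ p1 != p2, p1 != p3 & p2 != p3],
        [/\ int_disjoint a b p1 p2, int_disjoint a b p1 p3 &
            int_disjoint a b p2 p3] &
        forall v : T, [|| v \in a :: p1, v \in a :: p2 | v \in a :: p3]].

Definition matching (M : {set {set T}}) : Prop :=
  M \subset edges /\
  (forall s t, s \in M -> t \in M -> s != t -> [disjoint s & t]).

Definition kmatching (k : nat) (M : {set {set T}}) : Prop :=
  matching M /\ #|M| = k.

Definition covered_by_kmatchings (k m : nat) : Prop :=
  exists F : 'I_m -> {set {set T}},
    (forall i, kmatching k (F i)) /\ \bigcup_(i < m) F i = edges.

(* chi'_[k](G) = m  (a finite value m): m [k]-matchings cover E(G),
   and no fewer do. (If some edge lies in no [k]-matching, no finite
   cover exists, so this is false, consistent with chi' = infinity.) *)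
Definition excessive_index_eq (k m : nat) : Prop :=
  covered_by_kmatchings k m /\
  (forall m', m' < m -> ~ covered_by_kmatchings k m').

End Graphs.

(* Main.v *)
Require Import Defs.
From mathcomp Require Import all_boot zify.
Set Implicit Arguments. Unset Strict Implicit. Unset Printing Implicit Defensive.

Lemma trim_set (U : finType) (C A : {set U}) k :
  C \subset A -> #|C| <= k -> k <= #|A| ->
  exists B : {set U}, [/\ C \subset B, B \subset A & #|B| = k].
Proof.
move=> + Ck; move: {2}(#|A| - k) (erefl (#|A| - k)) => d.
elim: d A => [|d IH] A Ed CA kA.
  by exists A; split => //; lia.
have : #|C| < #|A| by lia.
move=> lt; have : A :\: C != set0.
  apply/negP => /eqP H0; have := cardsD A C.
  rewrite H0 cards0 => /esym/eqP; rewrite subn_eq0 => le.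
  have := subset_leq_card (subsetIr A C); lia.
case/set0Pn => x /setDP [xA xC].
have EA : #|A :\ x| = #|A| - 1 by rewrite (cardsD1 x A) xA; lia.
have E1 : #|A :\ x| - k = d by lia.
have E2 : C \subset A :\ x.
  apply/subsetP => y yC; rewrite in_setD1 (subsetP CA) // andbT.
  by apply/eqP => yx; move: yC; rewrite yx (negbTE xC).
have E3 : k <= #|A :\ x| by lia.
have [B [H1 H2 H3]] := IH (A :\ x) E1 E2 E3.
exists B; split => //; apply: subset_trans H2 (subsetDl _ _).
Qed.

Lemma card_bigcup_le (U : finType) m (F : 'I_m -> {set U}) :
  #|\bigcup_(i < m) F i| <= \sum_(i < m) #|F i|.
Proof.
elim: m F => [|m IH] F; first by rewrite big_ord0 cards0.
rewrite big_ord_recr /= (big_ord_recr m) /=.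
apply: leq_trans (leq_card_setU _ _) _.
by rewrite leq_add2r IH.
Qed.

Section Generic.
Variable T : finType.
Variable e : rel T.
Hypothesis sg : simple_graph e.

Lemma in_edges s : reflect (exists x y, e x y /\ s = [set x; y]) (s \in edges e).
Proof.
rewrite inE; apply: (iffP existsP) => [[x /existsP [y /andP [xy /eqP ->]]]|[x [y [xy ->]]]].
  by exists x, y.
by exists x; apply/existsP; exists y; rewrite xy eqxx.
Qed.

Lemma edge_neq x y : e x y -> x != y.
Proof. by case: sg => _ irr xy; apply/eqP => Exy; rewrite Exy irr in xy. Qed.

Lemma card_edge s : s \in edges e -> #|s| = 2.
Proof. by case/in_edges => x [y [xy ->]]; rewrite cards2 edge_neq. Qed.

Lemma nbr_edges x :
  #|[set y | e x y]| = #|[set s in edges e | x \in s]|.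
Proof.
have -> : [set s in edges e | x \in s] = (fun y => [set x; y]) @: [set y | e x y].
  apply/setP => s; rewrite in_set; apply/andP/imsetP.
    case=> /in_edges [u [v [uv ->]]]; rewrite !inE => /orP [] /eqP ->.
      by exists v; rewrite ?inE.
    exists u; last by rewrite setUC.
    by rewrite inE; case: sg => sym _; rewrite sym.
  case=> y; rewrite inE => xy ->; split; last by rewrite !inE eqxx.
  by apply/in_edges; exists x, y.
rewrite card_in_imset // => y y'; rewrite !inE => xy xy' E.
have : y \in [set x; y'] by rewrite -E !inE eqxx orbT.
rewrite !inE => /orP [/eqP yx|/eqP //].
by move: xy; rewrite yx; case: sg => _ ->.
Qed.

Lemma handshake : cubic e -> 2 * #|edges e| = 3 * #|T|.
Proof.
move=> cub.
have H1 : \sum_(x : T) #|[set y | e x y]| = 3 * #|T|.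
  rewrite (eq_bigr (fun _ => 3)) ?sum_nat_const; last by move=> x _; rewrite cub.
  by rewrite mulnC.
have H2 : \sum_(x : T) #|[set y | e x y]| =
          \sum_(x : T) \sum_(s in edges e) (x \in s : nat).
  apply: eq_bigr => x _; rewrite nbr_edges -sum1dep_card.
  by rewrite big_mkcondr; apply: eq_bigr => s _; case: (x \in s).
rewrite -H1 H2 exchange_big /=.
transitivity (\sum_(s in edges e) 2); first by rewrite sum_nat_const mulnC.
apply: eq_bigr => s sE; rewrite -(card_edge sE) -sum1_card big_mkcond /=.
by apply: eq_bigr => x _; case: (x \in s).
Qed.

End Generic.


Section Walk.
Variables (T : finType) (e : rel T).
Hypothesis sg : simple_graph e.
Variables (a b : T) (p1 p2 p3 : seq T).
Hypothesis ab : a != b.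
Hypotheses (P1 : is_path e a b p1) (P2 : is_path e a b p2) (P3 : is_path e a b p3).
Hypotheses (N12 : p1 != p2) (N13 : p1 != p3) (N23 : p2 != p3).
Hypotheses (D12 : int_disjoint a b p1 p2) (D13 : int_disjoint a b p1 p3)
           (D23 : int_disjoint a b p2 p3).
Hypothesis cov : forall v, [|| v \in a :: p1, v \in a :: p2 | v \in a :: p3].

Lemma path_size p : is_path e a b p -> 0 < size p.
Proof. by case: p => [|x p] // [_ /= H _]; move: ab; rewrite H eqxx. Qed.

Lemma nth_b p : is_path e a b p -> nth a (a :: p) (size p) = b.
Proof. by case=> _ H _; have := nth_last a (a :: p); rewrite /= => ->. Qed.

Lemma nth_eq_same p i j : is_path e a b p -> i <= size p -> j <= size p ->
  nth a (a :: p) i = nth a (a :: p) j -> i = j.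
Proof.
case=> _ _ U hi hj E; apply/eqP; rewrite -(nth_uniq a (s := a :: p)) ?E //.
Qed.

Lemma nth_mem' p i : i <= size p -> nth a (a :: p) i \in a :: p.
Proof. by move=> h; apply: mem_nth. Qed.

Lemma nth_eq_diff p p' i j : is_path e a b p -> is_path e a b p' ->
  int_disjoint a b p p' -> i <= size p -> j <= size p' ->
  nth a (a :: p) i = nth a (a :: p') j ->
  (i = 0 /\ j = 0) \/ (i = size p /\ j = size p').
Proof.
move=> Pp Pp' D hi hj E.
have m1 := nth_mem' hi; have m2 := nth_mem' hj; rewrite -E in m2.
case: (D _ m1 m2) => H.
- left; split.
  + by apply: (nth_eq_same Pp hi (leq0n _)); rewrite H.
  + by apply: (nth_eq_same Pp' hj (leq0n _)); rewrite -E H.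
- right; split.
  + by apply: (nth_eq_same Pp hi (leqnn _)); rewrite H nth_b.
  + by apply: (nth_eq_same Pp' hj (leqnn _)); rewrite -E H nth_b.
Qed.

Lemma idsym p p' : int_disjoint a b p p' -> int_disjoint a b p' p.
Proof. by move=> D x h1 h2; apply: D. Qed.

Lemma size1 p : is_path e a b p -> size p = 1 -> p = [:: b].
Proof. by case: p => [|x [|]] //= [_ /= H _] _; rewrite H. Qed.

Lemma len12 : ~ (size p1 = 1 /\ size p2 = 1).
Proof. by case=> h1 h2; move/eqP: N12; apply; rewrite (size1 P1 h1) (size1 P2 h2). Qed.
Lemma len13 : ~ (size p1 = 1 /\ size p3 = 1).
Proof. by case=> h1 h2; move/eqP: N13; apply; rewrite (size1 P1 h1) (size1 P3 h2). Qed.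
Lemma len23 : ~ (size p2 = 1 /\ size p3 = 1).
Proof. by case=> h1 h2; move/eqP: N23; apply; rewrite (size1 P2 h1) (size1 P3 h2). Qed.

Local Notation pp := (size p1).
Local Notation qq := (size p1 + size p2).
Local Notation LL := (size p1 + size p2 + size p3).

Definition f i := if i <= pp then nth a (a :: p1) i
  else if i <= qq then nth a (a :: p2) (qq - i) else nth a (a :: p3) (i - qq).

Lemma f1 i : i <= pp -> f i = nth a (a :: p1) i.
Proof. by rewrite /f => ->. Qed.

Lemma f2 i : pp <= i -> i <= qq -> f i = nth a (a :: p2) (qq - i).
Proof.
move=> h1 h2; rewrite /f; case: (leqP i pp) => h3; last by rewrite h2.
have -> : i = pp by lia.
by rewrite addKn !nth_b.
Qed.

Lemma f3 i : qq <= i -> f i = nth a (a :: p3) (i - qq).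
Proof.
have s2 := path_size P2.
move=> h; rewrite /f; case: (leqP i pp) => h1; first by lia.
case: (leqP i qq) => h2 //.
have -> : i = qq by lia.
by rewrite subnn.
Qed.

Lemma posEq i j : i <= LL -> j <= LL -> f i = f j ->
  i = j \/ (i = 0 /\ j = qq) \/ (i = qq /\ j = 0) \/ (i = pp /\ j = LL)
  \/ (i = LL /\ j = pp).
Proof.
have s1 := path_size P1; have s2 := path_size P2; have s3 := path_size P3.
have D21 := idsym D12; have D31 := idsym D13; have D32 := idsym D23.
move=> hi hj E.
case: (leqP i pp) => i1; [rewrite (f1 i1) in E|
  case: (leqP i qq) => i2; [rewrite (f2 (ltnW i1) i2) in E| rewrite (f3 (ltnW i2)) in E]];
(case: (leqP j pp) => j1; [rewrite (f1 j1) in E|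
  case: (leqP j qq) => j2; [rewrite (f2 (ltnW j1) j2) in E| rewrite (f3 (ltnW j2)) in E]]).
- have := nth_eq_same P1 i1 j1 E; lia.
- have := nth_eq_diff (j := qq - j) P1 P2 D12 i1 ltac:(lia) E; lia.
- have := nth_eq_diff (j := j - qq) P1 P3 D13 i1 ltac:(lia) E; lia.
- have := nth_eq_diff (i := qq - i) P2 P1 D21 ltac:(lia) j1 E; lia.
- have := nth_eq_same (i := qq - i) (j := qq - j) P2 ltac:(lia) ltac:(lia) E; lia.
- have := nth_eq_diff (i := qq - i) (j := j - qq) P2 P3 D23 ltac:(lia) ltac:(lia) E; lia.
- have := nth_eq_diff (i := i - qq) P3 P1 D31 ltac:(lia) j1 E; lia.
- have := nth_eq_diff (i := i - qq) (j := qq - j) P3 P2 D32 ltac:(lia) ltac:(lia) E; lia.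
- have := nth_eq_same (i := i - qq) (j := j - qq) P3 ltac:(lia) ltac:(lia) E; lia.
Qed.

Lemma f_adj k : k < LL -> e (f k) (f k.+1).
Proof.
have s1 := path_size P1; have s2 := path_size P2; have s3 := path_size P3.
case: sg => sym _.
move=> hk; case: (ltnP k pp) => k1.
- rewrite (f1 (ltnW k1)) (f1 k1).
  by case: P1 => /(pathP a) H _ _; apply: H.
case: (ltnP k qq) => k2.
- rewrite (f2 k1 (ltnW k2)) (f2 (leqW k1) k2).
  have -> : qq - k = (qq - k.+1).+1 by lia.
  rewrite sym; case: P2 => /(pathP a) H _ _; apply: H; lia.
- rewrite (f3 k2) (f3 (leqW k2)).
  have -> : k.+1 - qq = (k - qq).+1 by lia.
  case: P3 => /(pathP a) H _ _; apply: H; lia.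
Qed.

Lemma f_surj v : exists i, [/\ i < LL, i != qq & f i = v].
Proof.
have s1 := path_size P1; have s2 := path_size P2; have s3 := path_size P3.
have fix0 : forall i, i <= LL -> f i = v -> exists i, [/\ i < LL, i != qq & f i = v].
  move=> i hi E.
  case: (eqVneq i qq) => [iq|iq].
    exists 0; split; [lia|lia|].
    by rewrite -E iq (f1 (leq0n _)) (f2 (leq_addr _ _) (leqnn _)) subnn.
  case: (eqVneq i LL) => [iL|iL].
    exists pp; split => //; [lia|lia|].
    by rewrite -E iL (f1 (leqnn _)) (f3 (leq_addr _ _)) addKn !nth_b.
  by exists i; split => //; lia.
case/or3P: (cov v) => H.
- apply: (fix0 (index v (a :: p1))).
    by have := index_mem v (a :: p1); rewrite H /=; lia.
  rewrite f1 ?nth_index //.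
  by have := index_mem v (a :: p1); rewrite H /=; lia.
- have hI : index v (a :: p2) <= size p2.
    by have := index_mem v (a :: p2); rewrite H /=; lia.
  apply: (fix0 (qq - index v (a :: p2))); first by lia.
  rewrite f2; [|lia|lia].
  have -> : qq - (qq - index v (a :: p2)) = index v (a :: p2) by lia.
  by rewrite nth_index.
- have hI : index v (a :: p3) <= size p3.
    by have := index_mem v (a :: p3); rewrite H /=; lia.
  apply: (fix0 (qq + index v (a :: p3))); first by lia.
  by rewrite f3 ?addKn ?nth_index //; lia.
Qed.

Lemma cardT_LL : #|T| = LL.-1.
Proof.
have s1 := path_size P1; have s2 := path_size P2; have s3 := path_size P3.
have qL : qq < LL by lia.
pose Pos := [set i : 'I_LL | val i != qq].
have HT : [set: T] = (fun i : 'I_LL => f i) @: Pos.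
  apply/setP => v; rewrite inE; symmetry.
  have [i [hi hq <-]] := f_surj v.
  by apply/imsetP; exists (Ordinal hi); rewrite // inE.
rewrite -cardsT HT card_in_imset.
  have -> : Pos = [set~ Ordinal qL] by apply/setP => i; rewrite !inE -val_eqE.
  by rewrite cardsC1 card_ord.
move=> i j; rewrite !inE => hi hj E.
apply: ord_inj; have := posEq (ltnW (ltn_ord i)) (ltnW (ltn_ord j)) E.
have := ltn_ord i; have := ltn_ord j; move: hi hj => /= hi hj. lia.
Qed.


Ltac getsz := have := path_size P1; have := path_size P2; have := path_size P3;
  have := len12; have := len13; have := len23.

Ltac pe E := match type of E with f ?x = f ?y =>
  have := @posEq x y ltac:(lia) ltac:(lia) E end.

Definition compat k k' :=
  [&& k.+1 != k', (k != 0) || ((k' != qq.-1) && (k' != qq)) &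
      (k' != LL.-1) || ((k != pp.-1) && (k != pp))].

Definition g k := [set f k; f k.+1].

Lemma g_edge k : k < LL -> g k \in edges e.
Proof.
move=> hk; rewrite inE; apply/existsP; exists (f k); apply/existsP; exists (f k.+1).
by rewrite f_adj //= eqxx.
Qed.

Lemma disjP (U : finType) (A B : {set U}) :
  (forall x, x \in A -> x \in B -> False) -> [disjoint A & B].
Proof.
move=> H; rewrite disjoint_subset; apply/subsetP => x xA; rewrite inE.
by apply/negP => xB; apply: H xA xB.
Qed.

Lemma g_disj k k' : k < k' -> k' < LL -> compat k k' -> [disjoint g k & g k'].
Proof.
move=> h1 h2 C; apply: disjP => x; rewrite !inE.
move: C; rewrite /compat; getsz.
by move=> ? ? ? ? ? ? C /orP [] /eqP -> /orP [] /eqP E; pe E; lia.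
Qed.

Lemma g_inj k k' : k < LL -> k' < LL -> g k = g k' -> k = k'.
Proof.
move=> hk hk' E.
have m1 : f k \in g k' by rewrite -E !inE eqxx.
have m2 : f k.+1 \in g k' by rewrite -E !inE eqxx orbT.
getsz.
by move: m1 m2; rewrite !inE => /orP [] /eqP E1 /orP [] /eqP E2 ? ? ? ? ? ?;
  pe E1; pe E2; lia.
Qed.

Definition Hedges := [set g k | k : 'I_LL].

Lemma card_H : #|Hedges| = LL.
Proof.
rewrite card_imset ?card_ord //.
by move=> k k' E; apply: ord_inj; apply: g_inj E.
Qed.

Lemma sub_H : Hedges \subset edges e.
Proof. by apply/subsetP => s /imsetP [k _ ->]; apply: g_edge. Qed.

Lemma edge_at v s : s \in edges e -> v \in s -> exists u, e v u /\ s = [set v; u].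
Proof.
case: sg => sym _.
rewrite inE => /existsP [x /existsP [y /andP [xy /eqP ->]]].
rewrite !inE => /orP [] /eqP ->; first by exists y.
by exists x; rewrite sym setUC.
Qed.

Lemma inner v : exists j, [/\ 0 < j, j < LL & f j = v].
Proof.
getsz => ? ? ? ? ? ?.
have [i [hi hq E]] := f_surj v.
case: (posnP i) => i0.
  exists qq; split; [lia|lia|].
  by rewrite -E i0 (f1 (leq0n _)) (f2 (leq_addr _ _) (leqnn _)) subnn.
by exists i.
Qed.

Lemma f_pm_neq j : 0 < j -> j < LL -> f j.-1 != f j.+1.
Proof. move=> j0 jL; apply/eqP => E2; getsz => ? ? ? ? ? ?; pe E2; lia. Qed.

Definition M0 := edges e :\: Hedges.

Lemma card_M0 : #|M0| = #|edges e| - LL.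
Proof.
by rewrite cardsD (setIidPr sub_H) card_H.
Qed.

Lemma M0_match : cubic e -> matching e M0.
Proof.
move=> cub; split; first exact: subsetDl.
case: sg => sym _.
move=> s t; rewrite !in_setD => /andP [sH sE] /andP [tH tE] st.
apply: disjP => x xs xt.
have [j [j0 jL E]] := inner x.
have [u1 [xu1 Es]] := edge_at sE xs.
have [u2 [xu2 Et]] := edge_at tE xt.
have Hin : forall k, k < LL -> g k \in Hedges.
  by move=> k hk; apply/imsetP; exists (Ordinal hk).
have gj1 : g j.-1 = [set x; f j.-1].
  by rewrite /g setUC prednK // E.
have gj : g j = [set x; f j.+1] by rewrite /g E.
have n12 : u1 != u2 by apply: contra_neq st => e12; rewrite Es Et e12.
have nb : forall u s, s \notin Hedges -> s = [set x; u] -> (u != f j.-1) && (u != f j.+1).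
  move=> u s' sn Es'; apply/andP; split; apply/eqP => Eu; move: sn.
  - by rewrite Es' Eu -gj1 Hin //; apply: leq_ltn_trans (leq_pred j) jL.
  - by rewrite Es' Eu -gj Hin.
have /andP [n1a n1b] := nb _ _ sH Es.
have /andP [n2a n2b] := nb _ _ tH Et.
have nab : f j.-1 != f j.+1 by apply: f_pm_neq.
have ea : e x (f j.-1).
  by rewrite -E sym; have := f_adj (leq_ltn_trans (leq_pred j) jL); rewrite prednK.
have eb : e x (f j.+1) by rewrite -E; apply: f_adj.
have U : uniq [:: f j.-1; f j.+1; u1; u2].
  rewrite /= !inE !negb_or n12 andbT.
  by rewrite nab eq_sym n1a eq_sym n2a eq_sym n1b eq_sym n2b.
have : #|[:: f j.-1; f j.+1; u1; u2]| <= #|[set y | e x y]|.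
  apply: subset_leq_card; apply/subsetP => y; rewrite !inE.
  by case/or4P => /eqP ->.
by rewrite cub (card_uniqP U).
Qed.

Lemma gimg_match (D : finType) (A : {set D}) (h : D -> nat) :
  (forall x, x \in A -> h x < LL) ->
  (forall x y, x \in A -> y \in A -> h x < h y -> compat (h x) (h y)) ->
  matching e [set g (h x) | x in A].
Proof.
move=> hL hC; split.
  by apply/subsetP => s /imsetP [x xA ->]; apply: g_edge (hL x xA).
move=> s t /imsetP [x xA ->] /imsetP [y yA ->] st.
case: (ltngtP (h x) (h y)) => H.
- exact: g_disj H (hL y yA) (hC x y xA yA H).
- rewrite disjoint_sym; exact: g_disj H (hL x xA) (hC y x yA xA H).
- by rewrite H eqxx in st.
Qed.

Lemma gimg_card (D : finType) (A : {set D}) (h : D -> nat) :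
  (forall x, x \in A -> h x < LL) -> {in A &, injective h} ->
  #|[set g (h x) | x in A]| = #|A|.
Proof.
move=> hL hI; rewrite card_in_imset // => x y xA yA E.
by apply: hI => //; apply: g_inj (hL x xA) (hL y yA) E.
Qed.

Variable n : nat.
Hypothesis hn : 4 <= n.
Hypothesis hT : #|T| = 2 * n.
Hypothesis cub : cubic e.

Lemma LL_val : LL = 2 * n + 1.
Proof. have := cardT_LL; getsz; lia. Qed.

Lemma match_sub (M M' : {set {set T}}) : M' \subset M -> matching e M -> matching e M'.
Proof.
move=> sub [h1 h2]; split; first exact: subset_trans sub h1.
by move=> x y xM yM; apply: h2; apply: (subsetP sub).
Qed.

Lemma finish (B1 B2 B3 : {set {set T}}) :
  kmatching e n.-1 B1 -> kmatching e n.-1 B2 -> kmatching e n.-1 B3 ->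
  Hedges \subset B1 :|: B2 :|: B3 -> covered_by_kmatchings e n.-1 4.
Proof.
move=> k1 k2 k3 HB.
have cM0 : #|M0| = n.-1.
  have := handshake sg cub; rewrite card_M0 LL_val hT; lia.
pose fam (i : 'I_4) := nth set0 [:: M0; B1; B2; B3] i.
exists fam; split.
  move=> [[|[|[|[|m]]]] Hi] /=; [split => //; exact: M0_match|exact: k1|exact: k2|exact: k3|exfalso; lia].
have -> : \bigcup_(i < 4) fam i = M0 :|: B1 :|: B2 :|: B3.
  by rewrite !big_ord_recr big_ord0 /= set0U.
apply/setP => s; apply/idP/idP.
  rewrite !in_setU -!orbA => /or4P [] H.
  - by move: H; rewrite /M0 in_setD => /andP [].
  - by case: k1 => [[/subsetP + _] _]; apply.
  - by case: k2 => [[/subsetP + _] _]; apply.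
  - by case: k3 => [[/subsetP + _] _]; apply.
move=> sE; case: (boolP (s \in Hedges)) => sH.
  by have := subsetP HB s sH; rewrite !in_setU -!orbA => ->; rewrite !orbT.
by rewrite !in_setU /M0 in_setD sH sE.
Qed.

Section General.
Hypothesis L1 : 2 <= size p1.
Hypothesis L3 : 4 <= size p3.

Definition h1 (i : 'I_n.-1) := 2 * i + 1.
Definition h2 (i : 'I_n.-1) := if i < n - 2 then 2 * i + 2 else 2 * n - 1.
Definition h3 (i : 'I_n.+1) := 2 * i.
Definition I3 := [set i : 'I_n.+1 | [&& h3 i != pp.-1, h3 i != pp, h3 i != qq.-1 & h3 i != qq]].

Lemma gen_cover : covered_by_kmatchings e n.-1 4.
Proof.
have LLv := LL_val.
have s2 := path_size P2.
pose M1 := [set g (h1 x) | x in [set: 'I_n.-1]].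
pose M2 := [set g (h2 x) | x in [set: 'I_n.-1]].
pose A3 := [set g (h3 x) | x in I3].
pose C3 := [set g 0; g (2 * n - 2); g (2 * n)].
have hL1 : forall x, x \in [set: 'I_n.-1] -> h1 x < LL.
  by move=> x _; have := ltn_ord x; rewrite /h1; lia.
have hL2 : forall x, x \in [set: 'I_n.-1] -> h2 x < LL.
  by move=> x _; have := ltn_ord x; rewrite /h2; case: (ltnP x (n - 2)); lia.
have hL3 : forall x, x \in I3 -> h3 x < LL.
  by move=> x _; have := ltn_ord x; rewrite /h3; lia.
have k1 : kmatching e n.-1 M1.
  split.
    apply: gimg_match => // x y _ _; rewrite /h1 /compat; lia.
  rewrite gimg_card // ?cardsT ?card_ord // => x y _ _; rewrite /h1 => E.
  by apply: ord_inj; lia.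
have k2 : kmatching e n.-1 M2.
  split.
    apply: gimg_match => // x y _ _; have := ltn_ord x; have := ltn_ord y.
    by rewrite /h2 /compat; case: (ltnP x (n - 2)); case: (ltnP y (n - 2)); lia.
  rewrite gimg_card // ?cardsT ?card_ord // => x y _ _; rewrite /h2 => E.
  apply: ord_inj; move: E; have := ltn_ord x; have := ltn_ord y.
  by case: (ltnP x (n - 2)); case: (ltnP y (n - 2)); lia.
have mA3 : matching e A3.
  apply: gimg_match => // x y; rewrite !inE /h3 /compat.
  by have := ltn_ord x; have := ltn_ord y; lia.
have cI3 : n.-1 <= #|I3|.
  have hp := odd_double_half pp; have hq := odd_double_half qq.
  rewrite -muln2 in hp hq.
  have sub : ~: I3 \subset [set inord (pp./2); inord (qq./2)].
    have hp2 : pp <= 2 * n by lia.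
    have hq2 : qq <= 2 * n by lia.
    apply/subsetP => x; rewrite in_setC /I3 !inE /h3 -!val_eqE /= !inordK; lia.
  have := subset_leq_card sub; have := cardsC I3; rewrite card_ord.
  have : #|[set (inord (pp./2) : 'I_n.+1); inord (qq./2)]| <= 2.
    by rewrite cards2; case: (_ != _).
  lia.
have cA3 : n.-1 <= #|A3| by rewrite gimg_card // => x y _ _ E; apply: ord_inj; move: E; rewrite /h3; lia.
have CA : C3 \subset A3.
  apply/subsetP => s; rewrite /C3 !inE -!orbA => /or3P [] /eqP ->; apply/imsetP.
  - by exists (Ordinal (ltn0Sn n)) => //; rewrite inE /h3 /=; lia.
  - have hi : n.-1 < n.+1 by lia.
    exists (Ordinal hi); first by rewrite inE /h3 /=; lia.
    by rewrite /h3 /=; congr g; lia.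
  - exists (Ordinal (ltnSn n)) => //; rewrite inE /h3 /=; lia.
have cC3 : #|C3| <= n.-1.
  have h1' : #|C3| <= #|[:: g 0; g (2 * n - 2); g (2 * n)]|.
    by apply: subset_leq_card; apply/subsetP => s; rewrite /C3 !inE -!orbA.
  apply: leq_trans h1' _; apply: leq_trans (card_size _) _; rewrite /=; lia.
have [B3 [CB BA cB]] := trim_set CA cC3 cA3.
have k3 : kmatching e n.-1 B3 by split => //; apply: match_sub BA mA3.
apply: (finish k1 k2 k3).
apply/subsetP => s /imsetP [k _ ->].
have hk : nat_of_ord k < 2 * n + 1 by rewrite -LLv.
move: (nat_of_ord k) hk => m hk.
have hm := odd_double_half m; rewrite -muln2 in hm.
rewrite !inE -!orbA.
move: hm; case om : (odd m) => /= hm.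
- case: (leqP m (2 * n - 3)) => hm3.
  + have hi : m./2 < n.-1 by lia.
    apply/or3P; apply: Or31; apply/imsetP; exists (Ordinal hi) => //.
    by rewrite /h1 /=; congr g; lia.
  + have hi : n - 2 < n.-1 by lia.
    apply/or3P; apply: Or32; apply/imsetP; exists (Ordinal hi) => //.
    by rewrite /h2 /= ltnn; congr g; lia.
- case: (boolP [|| m == 0, m == 2 * n - 2 | m == 2 * n]) => hc.
  + apply/or3P; apply: Or33; apply: (subsetP CB); rewrite !inE -!orbA.
    by case/or3P: hc => /eqP ->; rewrite eqxx ?orbT.
  + have hi : m./2 - 1 < n.-1 by move: hc; lia.
    apply/or3P; apply: Or32; apply/imsetP; exists (Ordinal hi) => //.
    rewrite /h2 /=; move: hc; case: (ltnP (m./2 - 1) (n - 2)) => ? hc; last by lia.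
    by congr g; lia.
Qed.

End General.

Section Special.
Hypotheses (S1 : size p1 = 3) (S2 : size p2 = 3) (S3 : size p3 = 3).

Definition hl (l : seq nat) (i : 'I_3) := nth 0 l i.

Lemma spec_km (l : seq nat) : size l = 3 -> uniq l ->
  (forall x, hl l x < LL) ->
  (forall x y, hl l x < hl l y -> compat (hl l x) (hl l y)) ->
  kmatching e n.-1 [set g (hl l x) | x in [set: 'I_3]].
Proof.
move=> sl ul hL hC; split.
  by apply: gimg_match => [x _|x y _ _]; [apply: hL|apply: hC].
rewrite gimg_card ?cardsT ?card_ord; [by have := LL_val; lia|by move=> x _; apply: hL|].
move=> x y _ _ E; apply: ord_inj; apply/eqP.
by rewrite -(nth_uniq 0 _ _ ul) ?sl // -/(hl l x) -/(hl l y) E.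
Qed.

Lemma spec_in (l : seq nat) k : size l = 3 -> k \in l ->
  g k \in [set g (hl l x) | x in [set: 'I_3]].
Proof.
move=> sl kl; have hi : index k l < 3 by rewrite -sl index_mem.
by apply/imsetP; exists (Ordinal hi) => //; rewrite /hl /= nth_index.
Qed.

Lemma spec_cover : covered_by_kmatchings e n.-1 4.
Proof.
have k1 : kmatching e n.-1 [set g (hl [:: 0; 3; 7] x) | x in [set: 'I_3]].
  apply: spec_km => //.
    by move=> [[|[|[|//]]] hx]; rewrite /hl /=; lia.
  by move=> [[|[|[|//]]] hx] [[|[|[|//]]] hy]; rewrite /hl /compat /= S1 S2 S3.
have k2 : kmatching e n.-1 [set g (hl [:: 1; 5; 8] x) | x in [set: 'I_3]].
  apply: spec_km => //.
    by move=> [[|[|[|//]]] hx]; rewrite /hl /=; lia.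
  by move=> [[|[|[|//]]] hx] [[|[|[|//]]] hy]; rewrite /hl /compat /= S1 S2 S3.
have k3 : kmatching e n.-1 [set g (hl [:: 2; 4; 6] x) | x in [set: 'I_3]].
  apply: spec_km => //.
    by move=> [[|[|[|//]]] hx]; rewrite /hl /=; lia.
  by move=> [[|[|[|//]]] hx] [[|[|[|//]]] hy]; rewrite /hl /compat /= S1 S2 S3.
apply: (finish k1 k2 k3).
apply/subsetP => s /imsetP [k _ ->].
have hk : nat_of_ord k < 9 by have := ltn_ord k; lia.
move: (nat_of_ord k) hk => m hm.
have H : all (fun k => [|| k \in [:: 0; 3; 7], k \in [:: 1; 5; 8] | k \in [:: 2; 4; 6]])
  (iota 0 9) by [].
have := allP H m; rewrite mem_iota /= => /(_ hm) /or3P [] hm'; rewrite !in_setU.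
- by rewrite (@spec_in [:: 0; 3; 7] m erefl hm').
- by rewrite (@spec_in [:: 1; 5; 8] m erefl hm') orbT.
- by rewrite (@spec_in [:: 2; 4; 6] m erefl hm') orbT.
Qed.

End Special.

End Walk.

Definition good (T : finType) (e : rel T) a b (p1 p2 p3 : seq T) : Prop :=
  [/\ a != b, [/\ is_path e a b p1, is_path e a b p2 & is_path e a b p3],
      [/\ p1 != p2, p1 != p3 & p2 != p3],
      [/\ int_disjoint a b p1 p2, int_disjoint a b p1 p3 & int_disjoint a b p2 p3] &
      forall v, [|| v \in a :: p1, v \in a :: p2 | v \in a :: p3]].

Lemma swap12 (T : finType) (e : rel T) a b p1 p2 p3 :
  good e a b p1 p2 p3 -> good e a b p2 p1 p3.
Proof.
case=> ab [P1 P2 P3] [N12 N13 N23] [D12 D13 D23] cov; split => //.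
- by rewrite eq_sym.
- by split => //; apply: idsym.
- by move=> v; have := cov v; case/or3P => ->; rewrite ?orbT.
Qed.

Lemma swap23 (T : finType) (e : rel T) a b p1 p2 p3 :
  good e a b p1 p2 p3 -> good e a b p1 p3 p2.
Proof.
case=> ab [P1 P2 P3] [N12 N13 N23] [D12 D13 D23] cov; split => //.
- by split => //; rewrite eq_sym.
- by split => //; apply: idsym.
- by move=> v; have := cov v; case/or3P => ->; rewrite ?orbT.
Qed.

Lemma cover_good (T : finType) (e : rel T) n a b p1 p2 p3 :
  simple_graph e -> cubic e -> #|T| = 2 * n -> 4 <= n -> good e a b p1 p2 p3 ->
  (2 <= size p1 /\ 4 <= size p3) \/ [/\ size p1 = 3, size p2 = 3 & size p3 = 3] ->
  covered_by_kmatchings e n.-1 4.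
Proof.
move=> sg cub hT hn [ab [P1 P2 P3] [N12 N13 N23] [D12 D13 D23] cov] [[L1 L3]|[S1 S2 S3]].
- exact: (gen_cover sg ab P1 P2 P3 N12 N13 N23 D12 D13 D23 cov hn hT cub L1 L3).
- exact: (spec_cover sg ab P1 P2 P3 N12 N13 N23 D12 D13 D23 cov hn hT cub S1 S2 S3).
Qed.

Lemma lower (T : finType) (e : rel T) n : simple_graph e -> cubic e ->
  #|T| = 2 * n -> 1 <= n -> forall m', m' < 4 -> ~ covered_by_kmatchings e n.-1 m'.
Proof.
move=> sg cub hT hn m' hm [F [HF HU]].
have H1 := handshake sg cub.
have H2 := card_bigcup_le F; rewrite HU in H2.
have H3 : \sum_(i < m') #|F i| = m' * n.-1.
  rewrite (eq_bigr (fun _ => n.-1)); last by move=> i _; case: (HF i).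
  by rewrite sum_nat_const card_ord.
have H4 : m' * n.-1 <= 3 * n.-1 by apply: leq_mul => //; lia.
lia.
Qed.

Lemma main_thm (T : finType) (e : rel T) (n : nat) :
  simple_graph e -> connected_graph e -> cubic e -> bridgeless e ->
  three_star_connected e ->
  #|T| = 2 * n -> 4 <= n ->
  excessive_index_eq e n.-1 4.
Proof.
move=> sg _ cub _ [a [b [p1 [p2 [p3 G]]]]] hT hn.
split; last by apply: lower => //; lia.
have G' : good e a b p1 p2 p3 by exact: G.
case: G => ab [P1 P2 P3] [N12 N13 N23] [D12 D13 D23] cov.
have LLv := LL_val ab P1 P2 P3 N12 N13 N23 D12 D13 D23 cov hn hT.
have s1 := path_size ab P1; have s2 := path_size ab P2; have s3 := path_size ab P3.
have n12 := len12 P1 P2 N12; have n13 := len13 P1 P3 N13; have n23 := len23 P2 P3 N23.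
case: (leqP 4 (size p3)) => hz.
  case: (leqP 2 (size p1)) => hx.
    by apply: (cover_good sg cub hT hn G'); left; lia.
  by apply: (cover_good sg cub hT hn (swap12 G')); left; lia.
case: (leqP 4 (size p2)) => hy.
  case: (leqP 2 (size p1)) => hx.
    by apply: (cover_good sg cub hT hn (swap23 G')); left; lia.
  by apply: (cover_good sg cub hT hn (swap12 (swap23 G'))); left; lia.
case: (leqP 4 (size p1)) => hx.
  case: (leqP 2 (size p2)) => hy2.
    by apply: (cover_good sg cub hT hn (swap23 (swap12 G'))); left; lia.
  by apply: (cover_good sg cub hT hn (swap23 (swap12 (swap23 G')))); left; lia.
by apply: (cover_good sg cub hT hn G'); right; split; lia.
Qed.

Theorem proposition8 (T : finType) (e : rel T) (n : nat) :
  simple_graph e -> connected_graph e -> cubic e -> bridgeless e ->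
  three_star_connected e ->
  #|T| = 2 * n -> 4 <= n ->
  excessive_index_eq e n.-1 4.
Proof. exact: main_thm. Qed.
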